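(* Let $\mathcal E$ be a nonlinear Dirichlet form on $L^2(\mu)$ (so that $\mathcal E_e$ exists). (a) For every $h\in\ker\|\cdot\|_{L_e}$ and every $\alpha\ge0$ the set $\{h>\alpha\}$ is $\mathcal E$-invariant. (b) If $\mathcal E$ is irreducible, then $\ker\|\cdot\|_{L_e}\subseteq\mathbb R\cdot1$.
   Context: $(X,\mathfrak A,\mu)$ is $\sigma$-finite; $L^0(\mu)$ carries local convergence in measure. A nonlinear Dirichlet form is a lower semicontinuous convex $\mathcal E\colon L^2(\mu)\to[0,\infty]$ with $\mathcal E(-f)=\mathcal E(f)$, $\mathcal E(0)=0$, such that $\mathcal E(f+Cg)+\mathcal E(f-Cg)\le\mathcal E(f+g)+\mathcal E(f-g)$ for all $f,g$ and every 1-Lipschitz $C\colon\mathbb R\to\mathbb R$ with $C(0)=0$. $\mathcal E_e$ is the lower semicontinuous relaxation on $L^0(\mu)$ (w.r.t. local convergence in measure) of $\mathcal E$ extended by $+\infty$ outside $L^2(\mu)$; $M(\mathcal E_e)=\{f:\lim_{\lambda\to0+}\mathcal E_e(\lambda f)=0\}$ and $\|f\|_{L_e}=\inf\{\lambda>0:\mathcal E_e(\lambda^{-1}f)\le1\}$ on $M(\mathcal E_e)$. A measurable $A\subseteq X$ is $\mathcal E$-invariant if $\mathcal E(1_Af)\le\mathcal E(f)$ for all $f\in L^2(\mu)$; $\mathcal E$ is irreducible if every $\mathcal E$-invariant set is null or co-null. *)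

(* Defs.v *)
From HB Require Import structures.
From mathcomp Require Import all_boot all_order all_algebra.
From mathcomp Require Import all_classical all_reals all_analysis.
Set Implicit Arguments. Unset Strict Implicit. Unset Printing Implicit Defensive.
Import Order.TTheory GRing.Theory Num.Theory.
Import numFieldNormedType.Exports.
Local Open Scope classical_set_scope.
Local Open Scope ring_scope.

Section NonlinearDirichlet.
Context {d : measure_display} {T : measurableType d} {R : realType}.
Variable mu : {measure set T -> \bar R}.

Definition L2 (f : T -> R) : Prop :=
  measurable_fun setT f /\ (\int[mu]_x ((`|f x| ^+ 2)%:E) < +oo)%E.

Definition L2_conv (g : nat -> T -> R) (f : T -> R) : Prop :=
  (fun n => (\int[mu]_x ((`|g n x - f x| ^+ 2)%:E))%E) @ \oo --> 0%E.

Definition loc_meas_conv (g : nat -> T -> R) (f : T -> R) : Prop :=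
  forall A, measurable A -> (mu A < +oo)%E ->
  forall eps : R, 0 < eps ->
    (fun n => mu (A `&` [set x | eps < `|g n x - f x|])) @ \oo --> 0%E.

(* A nonlinear Dirichlet form, given as a functional on representatives
   of L^2 classes (its values on non-L^2 functions are irrelevant). *)
Definition nonlinear_dirichlet_form (E : (T -> R) -> \bar R) : Prop :=
  [/\ (
      (forall f g, L2 f -> L2 g -> {ae mu, forall x, f x = g x} -> E f = E g) /\
      (forall f, L2 f -> (0 <= E f)%E)),
      (forall f g (t : R), L2 f -> L2 g -> 0 <= t <= 1 ->
         (E (fun x => (t * f x + (1 - t) * g x)%R)
           <= t%:E * E f + (1 - t)%R%:E * E g)%E),
      (* lower semicontinuity on L^2 (L^2 is metrizable, so sequential) *)
      (forall (g : nat -> T -> R) f, (forall n, L2 (g n)) -> L2 f ->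
         L2_conv g f -> (E f <= limn_einf (fun n => E (g n)))%E),
      ((forall f, L2 f -> E (fun x => - f x) = E f) /\ E (fun _ => 0) = 0%E) &
      forall f g (C : R -> R),
        L2 f -> L2 g -> C 0 = 0 -> (forall a b, `|C a - C b| <= `|a - b|) ->
        (E (fun x => (f x + C (g x))%R) + E (fun x => (f x - C (g x))%R)
          <= E (fun x => (f x + g x)%R) + E (fun x => (f x - g x)%R))%E].

Definition Eext (E : (T -> R) -> \bar R) (f : T -> R) : \bar R :=
  if `[< L2 f >] then E f else +oo%E.

(* Lower semicontinuous relaxation on L^0 w.r.t. local convergence in
   measure (metrizable for sigma-finite mu, hence sequential form). *)
Definition Ee (E : (T -> R) -> \bar R) (f : T -> R) : \bar R :=
  ereal_inf [set limn_einf (fun n => Eext E (g n)) | g in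
               [set g : nat -> T -> R | (forall n, measurable_fun setT (g n))
                                        /\ loc_meas_conv g f]].

Definition ME (E : (T -> R) -> \bar R) (f : T -> R) : Prop :=
  (fun l : R => Ee E (fun x => l * f x)) @ 0^'+ --> 0%E.

Definition normLe (E : (T -> R) -> \bar R) (f : T -> R) : \bar R :=
  ereal_inf [set l%:E | l in [set l : R | 0 < l /\ (Ee E (fun x => (l^-1 * f x)%R) <= 1)%E]].

(* ker ||.||_{L_e} (elements of L^0 = measurable functions, in M(E_e)) *)
Definition kerLe (E : (T -> R) -> \bar R) (h : T -> R) : Prop :=
  [/\ measurable_fun setT h, ME E h & normLe E h = 0%E].

Definition E_invariant (E : (T -> R) -> \bar R) (A : set T) : Prop :=
  measurable A /\
  forall f, L2 f -> (E (fun x => (\1_A x * f x)%R) <= E f)%E.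

Definition irreducible (E : (T -> R) -> \bar R) : Prop :=
  forall A, E_invariant E A -> mu A = 0%E \/ mu (~` A) = 0%E.

End NonlinearDirichlet.

(* Main.v *)
Require Import Defs.
From HB Require Import structures.
From mathcomp Require Import all_boot all_order all_algebra.
From mathcomp Require Import all_classical all_reals all_analysis.
From mathcomp Require Import measurable_realfun.
From mathcomp Require Import ring lra.
Import Order.TTheory GRing.Theory Num.Theory.
Import numFieldNormedType.Exports.
Local Open Scope classical_set_scope.
Local Open Scope ring_scope.

Section Gen.
Context {R : realType}.
Local Open Scope ereal_scope.

Lemma cvge0P (x : nat -> \bar R) : (forall k, 0 <= x k) ->
  (forall e : R, (0 < e)%R -> \forall k \near \oo, x k <= e%:E) -> x @ \oo --> 0%:E.
Proof.
move=> x0 H; apply/fine_cvgP; split.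
  by apply: filterS (H 1%R ltr01) => k; move: (x0 k); case: (x k).
apply/cvgr0Pnorm_le => e e0; apply: filterS (H e e0) => k /=.
by move: (x0 k); case: (x k) => //= r; rewrite !lee_fin => r0 re; rewrite ger0_norm.
Qed.

Lemma limn_einf_lt (u : nat -> \bar R) a : limn_einf u < a ->
  forall N, exists2 n, (N <= n)%N & u n < a.
Proof.
move=> H N; apply: contrapT => H2.
have : a <= limn_einf u.
  rewrite limn_einf_lim; apply: lime_ge; first exact: is_cvg_einfs.
  near=> m; apply: le_ereal_inf_tmp => _ [n /= mn <-].
  have Nn : (N <= n)%N.
    apply: leq_trans mn; near: m; by exists N.
  by rewrite leNgt; apply/negP => K; apply: H2; exists n.
by rewrite leNgt H.
Unshelve. all: by end_near. Qed.

Lemma limn_einf_le (u : nat -> \bar R) b : (forall n, u n <= b) -> limn_einf u <= b.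
Proof.
move=> H; rewrite limn_einf_lim; apply: lime_le; first exact: is_cvg_einfs.
apply: nearW => m; apply: le_trans (H m); by apply: ereal_inf_lbound; exists m => /=.
Qed.

End Gen.

Section DF.
Context {d : measure_display} {T : measurableType d} {R : realType}.
Variable mu : {measure set T -> \bar R}.
Local Notation L2 := (L2 mu).

Lemma msq (F : T -> R) : measurable_fun setT F ->
  measurable_fun setT (fun x => ((`|F x| ^+ 2)%:E : \bar R)).
Proof.
move=> mF; apply/measurable_EFinP; apply: measurable_funX.
by apply: measurableT_comp => //; exact: normr_measurable.
Qed.

Lemma L2_dom (F f g : T -> R) : measurable_fun setT F -> L2 f -> L2 g ->
  (forall x, `|F x| <= `|f x| + `|g x|) -> L2 F.
Proof.
move=> mF [mf If] [mg Ig] H; split=> //.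
apply: (@le_lt_trans _ _ (\int[mu]_x (2%:E * (`|f x| ^+ 2)%:E + 2%:E * (`|g x| ^+ 2)%:E))%E).
  apply: ge0_le_integral.
  - by [].
  - by move=> x _; rewrite lee_fin sqr_ge0.
  - exact: msq.
  - by apply: emeasurable_funD; apply: measurable_funeM; exact: msq.
  - move=> x _; rewrite -!EFinM -EFinD lee_fin.
    have h1 := H x; have h2 := normr_ge0 (F x); have h3 := normr_ge0 (f x).
    have h4 := normr_ge0 (g x).
    have h5 : 0 <= (`|f x| + `|g x| - `|F x|) * (`|f x| + `|g x| + `|F x|).
      by apply: mulr_ge0; lra.
    have h6 := sqr_ge0 (`|f x| - `|g x|); nra.
rewrite ge0_integralD //.
- rewrite !ge0_integralZl_EFin //; try (by move=> x _; rewrite lee_fin sqr_ge0); try exact: msq.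
  by apply: lte_add_pinfty; apply: lte_mul_pinfty.
- by apply: measurable_funeM; exact: msq.
- by apply: measurable_funeM; exact: msq.
Qed.

Lemma L2_0 : L2 (fun _ => 0).
Proof.
split; first exact: measurable_cst.
rewrite (_ : (fun _ => _) = cst 0%E); last by apply/funext => x; rewrite normr0 expr0n.
by rewrite integral0.
Qed.

Lemma L2_le (F f : T -> R) : measurable_fun setT F -> L2 f ->
  (forall x, `|F x| <= `|f x|) -> L2 F.
Proof.
move=> mF Lf H; have := L2_dom F f (fun _ => 0) mF Lf L2_0; apply => x.
by rewrite normr0 addr0.
Qed.

Lemma L2_meas f : L2 f -> measurable_fun setT f.
Proof. by case. Qed.

Lemma mset_lt (f : T -> R) (a : R) : measurable_fun setT f ->
  measurable [set x | a < f x].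
Proof.
move=> mf; have := mf measurableT _ (measurable_itv `]a, +oo[).
rewrite setTI; congr measurable; apply/seteqP; split => x /=;
by rewrite in_itv /= andbT.
Qed.

End DF.

Section Real.
Context {R : realType}.

Lemma lip_cont (C : R -> R) : (forall a b, `|C a - C b| <= `|a - b|) -> continuous C.
Proof.
move=> H x; apply/cvgrPdist_lt => e e0; near=> y; apply: le_lt_trans (H x y) _.
near: y; exact: (@cvgr_dist_lt _ _ _ _ _ id x (@cvg_id _ _) e e0).
Unshelve. all: by end_near. Qed.

Lemma lip_meas d (T : measurableType d) (C : R -> R) (g : T -> R) :
  (forall a b, `|C a - C b| <= `|a - b|) -> measurable_fun setT g ->
  measurable_fun setT (fun x => C (g x)).
Proof.
move=> H mg; apply: (measurableT_comp (f := C)) => //.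
apply: continuous_measurable_fun; apply: lip_cont => a b; exact: H a b.
Qed.

Lemma min_id (a b : R) : (a + b) / 2 + - `|(a - b) / 2| = Num.min a b.
Proof.
have [h|h] := leP a b.
  by rewrite ler0_norm; [lra|lra].
by rewrite ger0_norm; [lra|lra].
Qed.

Lemma max_id (a b : R) : (a + b) / 2 - - `|(a - b) / 2| = Num.max a b.
Proof.
have [h|h] := leP a b.
  by rewrite ler0_norm; [lra|lra].
by rewrite ger0_norm; [lra|lra].
Qed.

End Real.

Section Real2.
Context {R : realType}.
Local Open Scope ereal_scope.
Lemma ee_half (x y : \bar R) : x + x <= y + y -> x <= y.
Proof.
case: x => [r| |]; case: y => [s| |] //=.
- rewrite !lee_fin => h; lra.
all: by move=> _; rewrite ?leey ?leNye.
Qed.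
Local Close Scope ereal_scope.

Lemma nb (y a b : R) : -(`|a| + `|b|) <= y -> y <= `|a| + `|b| -> `|y| <= `|a| + `|b|.
Proof. by move=> h1 h2; rewrite ler_norml h1 h2. Qed.

Lemma absb (a : R) : a <= `|a| /\ - a <= `|a|.
Proof. by split; [exact: ler_norm | rewrite -normrN; exact: ler_norm]. Qed.

End Real2.

Definition clamp {R : realType} (a w : R) := Num.max (Num.min a w) (- w).

Section EF.
Context {d : measure_display} {T : measurableType d} {R : realType}.
Variable mu : {measure set T -> \bar R}.
Variable E : (T -> R) -> \bar R.
Hypothesis HE : nonlinear_dirichlet_form mu E.
Local Notation L2 := (L2 mu).

Lemma E_ge0 f : L2 f -> (0 <= E f)%E.
Proof. by case: HE => [[_ H] _ _ _ _]; apply: H. Qed.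

Lemma E_sym f : L2 f -> E (fun x => - f x) = E f.
Proof. by case: HE => _ _ _ [H _] _; apply: H. Qed.

Lemma E_zero : E (fun _ => 0) = 0%E.
Proof. by case: HE => _ _ _ [_ H] _. Qed.

Lemma L2_N f : L2 f -> L2 (fun x => - f x).
Proof.
move=> Lf; apply: (L2_le mu (fun x => - f x) f) => //.
  exact: measurableT_comp (L2_meas mu _ Lf).
by move=> x; rewrite normrN.
Qed.

Lemma L2_lip (C : R -> R) g : L2 g -> C 0 = 0 -> (forall a b, `|C a - C b| <= `|a - b|) ->
  L2 (fun x => C (g x)).
Proof.
move=> Lg C0 HC; apply: (L2_le mu _ g) => //.
  exact: lip_meas HC (L2_meas mu _ Lg).
by move=> x; have := HC (g x) 0; rewrite C0 !subr0.
Qed.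

Lemma E_contr1 g (C : R -> R) : L2 g -> C 0 = 0 ->
  (forall a b, `|C a - C b| <= `|a - b|) -> (E (fun x => C (g x)) <= E g)%E.
Proof.
move=> Lg C0 HC; case: HE => _ _ _ _ Ec.
have LCg := L2_lip C g Lg C0 HC.
have := Ec (fun _ => 0) g C (L2_0 mu) Lg C0 HC.
rewrite (_ : (fun x => 0 + C (g x)) = (fun x => C (g x))); last by apply/funext => x; rewrite add0r.
rewrite (_ : (fun x => 0 - C (g x)) = (fun x => - C (g x))); last by apply/funext => x; rewrite add0r.
rewrite (_ : (fun x => 0 + g x) = g); last by apply/funext => x; rewrite add0r.
rewrite (_ : (fun x => 0 - g x) = (fun x => - g x)); last by apply/funext => x; rewrite add0r.
by rewrite E_sym // E_sym //; apply: ee_half.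
Qed.

Lemma mhalf (u v : T -> R) (s : R) : measurable_fun setT u -> measurable_fun setT v ->
  measurable_fun setT (fun x => (u x + s * v x) / 2).
Proof.
move=> mu' mv; apply: (measurable_funM (f := fun x => u x + s * v x) (g := cst (2^-1))).
  apply: measurable_funD => //; exact: measurable_funM.
exact: measurable_cst.
Qed.

Lemma E_lattice u v : L2 u -> L2 v ->
  (E (fun x => Num.min (u x) (v x)) + E (fun x => Num.max (u x) (v x)) <= E u + E v)%E.
Proof.
move=> Lu Lv; case: HE => _ _ _ _ Ec.
have mu' := L2_meas mu _ Lu; have mv := L2_meas mu _ Lv.
have Lf : L2 (fun x => (u x + 1 * v x) / 2).
  apply: (L2_dom mu _ u v) => //; first exact: mhalf.
  move=> x; have [h1 h2] := absb (u x); have [h3 h4] := absb (v x).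
  apply: nb; lra.
have Lg : L2 (fun x => (u x + (-1) * v x) / 2).
  apply: (L2_dom mu _ u v) => //; first exact: mhalf.
  move=> x; have [h1 h2] := absb (u x); have [h3 h4] := absb (v x).
  apply: nb; lra.
have C0 : (fun t : R => - `|t|) 0 = 0 by rewrite /= normr0 oppr0.
have HC : forall a b : R, `|(fun t : R => - `|t|) a - (fun t : R => - `|t|) b| <= `|a - b|.
  move=> a b /=; rewrite -opprD normrN; exact: ler_dist_dist.
have := Ec _ _ _ Lf Lg C0 HC.
rewrite (_ : (fun x => _ + _) = (fun x => Num.min (u x) (v x))); last first.
  apply/funext => x /=; by rewrite -min_id mul1r mulN1r.
rewrite (_ : (fun x => _ - _) = (fun x => Num.max (u x) (v x))); last first.
  apply/funext => x /=; by rewrite -max_id mul1r mulN1r.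
rewrite (_ : (fun x => _ + _) = u); last by apply/funext => x /=; lra.
by rewrite (_ : (fun x => _ - _) = v); last by apply/funext => x /=; lra.
Qed.

Lemma L2_min u v : L2 u -> L2 v -> L2 (fun x => Num.min (u x) (v x)).
Proof.
move=> Lu Lv; apply: (L2_dom mu _ u v) => //.
  by apply: measurable_minr; [exact: (L2_meas mu _ Lu)|exact: (L2_meas mu _ Lv)].
move=> x; have [h1 h2] := absb (u x); have [h3 h4] := absb (v x).
apply: nb => /=; have [h|h] := leP (u x) (v x); lra.
Qed.

Lemma L2_max u v : L2 u -> L2 v -> L2 (fun x => Num.max (u x) (v x)).
Proof.
move=> Lu Lv; apply: (L2_dom mu _ u v) => //.
  by apply: measurable_maxr; [exact: (L2_meas mu _ Lu)|exact: (L2_meas mu _ Lv)].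
move=> x; have [h1 h2] := absb (u x); have [h3 h4] := absb (v x).
apply: nb => /=; have [h|h] := leP (u x) (v x); lra.
Qed.

Lemma E_min u v : L2 u -> L2 v -> (E (fun x => Num.min (u x) (v x)) <= E u + E v)%E.
Proof.
move=> Lu Lv; apply: le_trans (E_lattice u v Lu Lv).
by apply: leeDl; apply: E_ge0; exact: L2_max u v Lu Lv.
Qed.

Lemma E_max u v : L2 u -> L2 v -> (E (fun x => Num.max (u x) (v x)) <= E u + E v)%E.
Proof.
move=> Lu Lv; apply: le_trans (E_lattice u v Lu Lv).
by apply: leeDr; apply: E_ge0; exact: L2_min u v Lu Lv.
Qed.

Lemma E_clamp u w : L2 u -> L2 w ->
  (E (fun x => clamp (u x) (w x)) <= E u + E w + E w)%E.
Proof.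
move=> Lu Lw; rewrite /clamp.
apply: le_trans (E_max _ _ (L2_min u w Lu Lw) (L2_N w Lw)) _.
by rewrite E_sym //; apply: leeD => //; exact: E_min u w Lu Lw.
Qed.

Lemma E_scale f (t : R) : L2 f -> 0 <= t <= 1 -> (E (fun x => (t * f x)%R) <= t%:E * E f)%E.
Proof.
move=> Lf ht; case: HE => _ Ecv _ _ _.
have := Ecv f (fun _ => 0) t Lf (L2_0 mu) ht.
rewrite E_zero mule0 adde0.
by rewrite (_ : (fun x => (t * f x + (1 - t) * 0)%R) = (fun x => t * f x)) //; apply/funext => x; rewrite mulr0 addr0.
Qed.

End EF.

Section Conv.
Context {d : measure_display} {T : measurableType d} {R : realType}.
Variable mu : {measure set T -> \bar R}.
Local Notation L2 := (L2 mu).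

Lemma cvge0_ev (a : nat -> \bar R) : a @ \oo --> 0%:E ->
  forall e : R, 0 < e -> \forall n \near \oo, (a n <= e%:E)%E.
Proof.
move/fine_cvgP => [Hfin Hc] e e0.
move/cvgr0Pnorm_le : Hc => /(_ e e0) Hc.
apply: filterS2 Hfin Hc => n /= Hf Hn.
by rewrite -(fineK Hf) lee_fin (le_trans (ler_norm _) Hn).
Qed.

Lemma dct0 (F : nat -> T -> R) (G : T -> R) :
  (forall n, measurable_fun setT (F n)) -> measurable_fun setT G ->
  (\int[mu]_x (G x)%:E < +oo)%E -> (forall n x, 0 <= F n x <= G x) ->
  (forall x, F ^~ x @ \oo --> 0) ->
  (fun n => \int[mu]_x (F n x)%:E)%E @ \oo --> 0%:E.
Proof.
move=> mF mG IG FG Fc.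
have G0 x : 0 <= G x by have /andP[h1 h2] := FG 0%N x; exact: le_trans h1 h2.
have := @dominated_cvg _ _ _ mu setT measurableT (fun n x => (F n x)%:E) (cst 0%E)
  (fun x => (G x)%:E).
rewrite integral0; apply.
- by move=> n; apply/measurable_EFinP; exact: mF.
- move=> x _; apply: cvg_EFin; first exact: nearW.
  exact: Fc.
- by [].
- apply/integrableP; split; first exact/measurable_EFinP.
  under eq_integral do rewrite abse_EFin ger0_norm //.
  by [].
- move=> n x _; rewrite abse_EFin lee_fin.
  by have /andP[h1 h2] := FG n x; rewrite ger0_norm.
Qed.

Lemma mnormsq (f g : T -> R) : measurable_fun setT f -> measurable_fun setT g ->
  measurable_fun setT (fun x => `|f x - g x| ^+ 2).
Proof.
move=> mf mg; apply: measurable_funX.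
by apply: measurableT_comp; [exact: normr_measurable| exact: measurable_funB].
Qed.

Lemma sq_bound (a b c : R) : `|a| <= `|c| -> `|b| <= `|c| -> `|a - b| ^+ 2 <= 4 * `|c| ^+ 2.
Proof.
move=> h1 h2; have h3 := ler_normB a b.
have h4 := normr_ge0 (a - b); have h5 := normr_ge0 c.
have h6 : `|a - b| <= 2 * `|c| by lra.
have h7 : 0 <= (2 * `|c| - `|a - b|) * (2 * `|c| + `|a - b|) by apply: mulr_ge0; lra.
nra.
Qed.

Lemma L2_4 (u : T -> R) : L2 u -> (\int[mu]_x ((4 * `|u x| ^+ 2)%:E) < +oo)%E.
Proof.
move=> [mu' Iu]; under eq_integral do rewrite EFinM.
rewrite ge0_integralZl_EFin //; first exact: lte_mul_pinfty.
all: try (by move=> x _; rewrite lee_fin sqr_ge0); exact: msq.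
Qed.

Lemma m4 (u : T -> R) : measurable_fun setT u -> measurable_fun setT (fun x => 4 * `|u x| ^+ 2).
Proof.
move=> mu'; apply: measurable_funM; first exact: measurable_cst.
apply: measurable_funX; apply: measurableT_comp => //; exact: normr_measurable.
Qed.

Lemma L2_conv_pw (z : nat -> T -> R) (y u : T -> R) : L2 u ->
  (forall n, measurable_fun setT (z n)) -> measurable_fun setT y ->
  (forall n x, `|z n x| <= `|u x|) -> (forall x, `|y x| <= `|u x|) ->
  (forall x, z ^~ x @ \oo --> y x) -> L2_conv mu z y.
Proof.
move=> Lu mz my zu yu zc.
apply: (dct0 (fun n x => `|z n x - y x| ^+ 2) (fun x => 4 * `|u x| ^+ 2)).
- by move=> n; apply: mnormsq.
- exact: m4 (L2_meas _ _ Lu).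
- exact: L2_4.
- by move=> n x; rewrite sqr_ge0 /=; apply: sq_bound.
- move=> x; apply/cvgr0Pnorm_le => e e0.
  have e1 : 0 < Num.min e 1 by rewrite lt_min e0 ltr01.
  near=> n.
  have h : `|y x - z n x| <= Num.min e 1 by near: n; exact: cvgr_dist_le.
  move: h; rewrite le_min => /andP[h1 h2].
  rewrite distrC in h1 h2.
  have h3 := normr_ge0 (z n x - y x).
  rewrite ger0_norm ?sqr_ge0 //; nra.
Unshelve. all: by end_near. Qed.

Lemma mset_le (f : T -> R) (a : R) : measurable_fun setT f ->
  measurable [set x | f x <= a].
Proof.
move=> mf; have := mf measurableT _ (measurable_itv `]-oo, a]).
rewrite setTI; congr measurable; apply/seteqP; split => x /=;
by rewrite in_itv /=.
Qed.

Lemma dom_loc_L2 (z : nat -> T -> R) (y u : T -> R) : L2 u ->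
  (forall n, measurable_fun setT (z n)) -> measurable_fun setT y ->
  (forall n x, `|z n x| <= `|u x|) -> (forall x, `|y x| <= `|u x|) ->
  loc_meas_conv mu z y -> L2_conv mu z y.
Proof.
move=> Lu mz my zu yu zc.
have mu' := L2_meas _ _ Lu.
pose G x := 4 * `|u x| ^+ 2.
have mG : measurable_fun setT G := m4 u mu'.
have IG : (\int[mu]_x (G x)%:E < +oo)%E := L2_4 u Lu.
have G0 x : 0 <= G x by rewrite /G mulr_ge0 ?sqr_ge0.
pose S (n : nat) := [set x | 1 < n.+1%:R * G x] `&` [set x | G x <= n.+1%:R].
have mS n : measurable (S n).
  apply: measurableI; last exact: (mset_le G).
  apply: (mset_lt (fun x => n.+1%:R * G x) 1).
  by apply: measurable_funM => //; exact: measurable_cst.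
pose Gn n x := G x * \1_(~` S n) x.
have cGn : (fun n => \int[mu]_x (Gn n x)%:E)%E @ \oo --> 0%:E.
  apply: (dct0 Gn G) => //.
  - move=> n; apply: measurable_funM => //.
    by apply: measurable_indic; apply: measurableC.
  - move=> n x; rewrite /Gn indicE; case: (_ \in _).
      by rewrite mulr1 lexx G0.
    by rewrite mulr0 lexx G0.
  - move=> x; apply/cvgr0Pnorm_le => e e0.
    have [Gx0|Gx0] := eqVneq (G x) 0.
      by near=> n; rewrite /Gn Gx0 mul0r normr0 ltW.
    have Gp : 0 < G x by rewrite lt0r Gx0 G0.
    near=> n.
    have h1 : (G x)^-1 < n%:R by near: n; exact: nbhs_infty_gtr.
    have h2 : G x <= n%:R by near: n; exact: nbhs_infty_ger.
    have h3 : G x * (G x)^-1 = 1 by rewrite mulfV.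
    have h4 : (n%:R : R) <= n.+1%:R by rewrite ler_nat.
    have xS : S n x.
      split => /=; [nra|lra].
    rewrite /Gn indicE.
    have -> : (x \in ~` S n) = false.
      by apply/negbTE; rewrite in_setC negbK; exact/mem_set.
    by rewrite mulr0 normr0 ltW.
apply: cvge0P; first by move=> k; apply: integral_ge0 => x _; rewrite lee_fin sqr_ge0.
move=> e e0.
have e30 : 0 < e / 3 by rewrite divr_gt0.
have [N _ HN] := cvge0_ev _ cGn _ e30.
have IGN := HN N (leqnn N).
pose SN := S N.
have mSN : measurable SN := mS N.
have muS : (mu SN <= (N.+1%:R)%:E * \int[mu]_x (G x)%:E)%E.
  rewrite -ge0_integralZl_EFin //; last 2 first.
  - by move=> x _; rewrite lee_fin.
  - exact/measurable_EFinP.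
  rewrite -(setIT SN) -integral_indic //.
  apply: ge0_le_integral.
  - by [].
  - by move=> x _; rewrite lee_fin indicE; case: (_ \in _).
  - apply/measurable_EFinP; exact: measurable_indic.
  - apply/measurable_EFinP; apply: measurable_funM => //; exact: measurable_cst.
  - move=> x _; rewrite lee_fin indicE.
    case: (boolP (x \in SN)) => xS.
      by move/set_mem: xS => [/= h1 h2]; exact: ltW.
    by rewrite mulr_ge0.
have muSfin : (mu SN < +oo)%E.
  apply: le_lt_trans muS _; apply: lte_mul_pinfty => //.
have mS0 : (0 <= mu SN)%E by [].
pose m := fine (mu SN).
have mE : mu SN = m%:E by rewrite /m fineK // ge0_fin_numE.
have m0 : 0 <= m by rewrite -lee_fin -mE.
pose eta := e / 3 / (m + 1).
have eta0 : 0 < eta by rewrite /eta divr_gt0 //; lra.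
pose th := Num.min eta 1.
have th0 : 0 < th by rewrite lt_min eta0 ltr01.
have cB := zc SN mSN muSfin th th0.
have eN0 : 0 < e / 3 / N.+1%:R by rewrite divr_gt0.
apply: filterS (cvge0_ev _ cB _ eN0) => k Hk.
pose B := [set x | th < `|z k x - y x|].
have mB : measurable B.
  apply: (mset_lt (fun x => `|z k x - y x|) th).
  by apply: measurableT_comp; [exact: normr_measurable|exact: measurable_funB].
have mSB : measurable (SN `&` B) by exact: measurableI.
have Hpt x : ((`|z k x - y x| ^+ 2)%:E <= (Gn N x)%:E + (eta%:E * (\1_SN x)%:E
    + (N.+1%:R)%:E * (\1_(SN `&` B) x)%:E))%E.
  rewrite -!EFinM -!EFinD lee_fin /Gn !indicE.
  have hD := sq_bound _ _ _ (zu k x) (yu x).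
  have hth : th <= eta /\ th <= 1.
    by have := lexx th; rewrite {2}/th le_min => /andP[].
  have hD0 := normr_ge0 (z k x - y x).
  case: (boolP (x \in SN)) => xS.
  - have [h1 h2] : SN x := set_mem xS.
    have h2' : 4 * `|u x| ^+ 2 <= N.+1%:R := h2.
    have -> : (x \in ~` SN) = false by rewrite in_setC xS.
    case: (boolP (x \in SN `&` B)) => xB.
      rewrite mulr0 !mulr1 add0r; lra.
    have nB : ~ B x.
      by move=> bx; apply: (negP xB); apply/mem_set; split => //; exact: set_mem xS.
    have hle : `|z k x - y x| <= th by rewrite leNgt; apply/negP => hh; apply: nB.
    have hq : 0 <= (th - `|z k x - y x|) * `|z k x - y x| by apply: mulr_ge0; lra.
    have hq2 : 0 <= (1 - `|z k x - y x|) * th by apply: mulr_ge0; lra.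
    rewrite !mulr0 !mulr1 add0r; nra.
  - have -> : (x \in ~` SN) = true by rewrite in_setC xS.
    have -> : (x \in SN `&` B) = false.
      by apply/negbTE; apply: contra xS; rewrite in_setI => /andP[].
    rewrite !mulr0 mulr1 !addr0; exact: hD.
have mGn : measurable_fun setT (fun x => (Gn N x)%:E).
  apply/measurable_EFinP; apply: measurable_funM => //.
  by apply: measurable_indic; apply: measurableC.
have HI : (\int[mu]_x (`|z k x - y x| ^+ 2)%:E <= \int[mu]_x ((Gn N x)%:E + (eta%:E * (\1_SN x)%:E
    + (N.+1%:R)%:E * (\1_(SN `&` B) x)%:E)))%E.
  apply: ge0_le_integral.
  - by [].
  - by move=> x _; rewrite lee_fin sqr_ge0.
  - apply/measurable_EFinP; exact: mnormsq.
  - apply: emeasurable_funD => //; apply: emeasurable_funD; apply: measurable_funeM;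
      apply/measurable_EFinP; exact: measurable_indic.
  - by move=> x _; exact: Hpt.
have HE : (\int[mu]_x ((Gn N x)%:E + (eta%:E * (\1_SN x)%:E
    + (N.+1%:R)%:E * (\1_(SN `&` B) x)%:E)) =
    \int[mu]_x (Gn N x)%:E + (eta%:E * mu SN + (N.+1%:R)%:E * mu (SN `&` B)))%E.
  rewrite ge0_integralD //.
  rewrite ge0_integralD //.
  rewrite ge0_integralZl_EFin //.
  rewrite ge0_integralZl_EFin //.
  rewrite !integral_indic // !setIT //.
  all: try (apply/measurable_EFinP; exact: measurable_indic).
  all: try (apply: measurable_funeM; apply/measurable_EFinP; exact: measurable_indic).
  all: try (apply: emeasurable_funD; apply: measurable_funeM; apply/measurable_EFinP; exact: measurable_indic).
  all: try (by apply: ltW).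
  all: try (move=> x _; rewrite /Gn ?indicE; repeat case: (_ \in _);
    rewrite /= -?EFinM -?EFinD lee_fin ?mulr0 ?mulr1 ?addr0 ?add0r;
    by [|apply: ltW|apply: G0|rewrite addr_ge0 ?ltW]).
apply: le_trans HI _; rewrite HE mE.
have Hk' : ((N.+1%:R)%:E * mu (SN `&` B) <= (N.+1%:R)%:E * (e/3/N.+1%:R)%:E)%E.
  by apply: lee_wpmul2l => //; rewrite lee_fin.
apply: le_trans (leeD IGN (leeD (lexx _) Hk')) _.
rewrite -!EFinM -!EFinD lee_fin.
have q1 : eta * m <= e / 3.
  rewrite /eta -mulrA; apply: ler_piMr; first exact: ltW.
  rewrite mulrC ler_pdivrMr ?mul1r; lra.
have q2 : N.+1%:R * (e / 3 / N.+1%:R) = e / 3 by rewrite mulrC divfK // pnatr_eq0.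
rewrite q2. lra.
Unshelve. all: by end_near. Qed.

End Conv.

Section Real3.
Context {R : realType}.
Definition Cc (c t : R) := Num.max (t - c) 0.

Lemma Cc0 c : 0 <= c -> Cc c 0 = 0.
Proof. by move=> c0; rewrite /Cc; have [h|h] := leP (0 - c) 0; lra. Qed.

Lemma Cc_ge0 c t : 0 <= Cc c t.
Proof. by rewrite /Cc; have [h|h] := leP (t - c) 0; lra. Qed.

Lemma Cc_lip c a b : `|Cc c a - Cc c b| <= `|a - b|.
Proof.
have [h1 h2] := absb (a - b).
rewrite /Cc; have [h3|h3] := leP (a - c) 0; have [h4|h4] := leP (b - c) 0;
  rewrite ler_norml; apply/andP; split; lra.
Qed.

Lemma clamp_abs (a w : R) : 0 <= w -> `|clamp a w| <= `|a|.
Proof.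
move=> w0; have [h1 h2] := absb a.
rewrite /clamp; have [h3|h3] := leP a w.
  have [h4|h4] := leP a (- w); rewrite ler_norml; apply/andP; split; lra.
have [h4|h4] := leP w (- w); rewrite ler_norml; apply/andP; split; lra.
Qed.

Lemma clamp_lip (a w w' : R) : 0 <= w -> 0 <= w' -> `|clamp a w - clamp a w'| <= `|w - w'|.
Proof.
move=> w0 w'0; have [h1 h2] := absb (w - w').
rewrite /clamp; have [h3|h3] := leP a w; have [h4|h4] := leP a w'.
- by have [h5|h5] := leP a (- w); have [h6|h6] := leP a (- w');
    rewrite ler_norml; apply/andP; split; lra.
- by have [h5|h5] := leP a (- w); have [h6|h6] := leP w' (- w');
    rewrite ler_norml; apply/andP; split; lra.
- by have [h5|h5] := leP w (- w); have [h6|h6] := leP a (- w');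
    rewrite ler_norml; apply/andP; split; lra.
- by have [h5|h5] := leP w (- w); have [h6|h6] := leP w' (- w');
    rewrite ler_norml; apply/andP; split; lra.
Qed.

Lemma clamp_id (a w : R) : `|a| <= w -> clamp a w = a.
Proof.
move=> h; have [h1 h2] := absb a.
rewrite /clamp; have [h3|h3] := leP a w; last lra.
by have [h4|h4] := leP a (- w); lra.
Qed.

Lemma clamp_0 (a : R) : clamp a 0 = 0.
Proof.
rewrite /clamp; have [h3|h3] := leP a 0.
  by have [h4|h4] := leP a (- 0); lra.
by have [h4|h4] := leP 0 (- 0); lra.
Qed.
End Real3.

Section Main.
Context {d : measure_display} {T : measurableType d} {R : realType}.
Variable mu : {measure set T -> \bar R}.
Variable E : (T -> R) -> \bar R.
Hypothesis HE : nonlinear_dirichlet_form mu E.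
Local Notation L2 := (L2 mu).

Lemma Ee_approx f (a : R) : (Ee mu E f < a%:E)%E ->
  exists g : nat -> T -> R, (forall k, L2 (g k) /\ (E (g k) < a%:E)%E) /\ loc_meas_conv mu g f.
Proof.
move/ereal_inf_lt => [_ [g0 [mg0 cg0] <-] Hlt].
have H := limn_einf_lt _ _ Hlt.
have /choice [phi Hphi] : forall N, exists n, (N <= n)%N /\ (Eext mu E (g0 n) < a%:E)%E.
  by move=> N; have [n h1 h2] := H N; exists n.
exists (fun k => g0 (phi k)); split.
  move=> k; have [_ h] := Hphi k; move: h; rewrite /Eext.
  by case: asboolP => [Lg h|_]; [split| rewrite ltNge leey].
have phioo : phi @ \oo --> \oo.
  move=> P [N _ HN]; exists N => // k /= Nk; apply: HN => /=.
  by apply: leq_trans Nk _; case: (Hphi k).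
move=> A mA Afin eps eps0.
exact: (cvg_comp _ _ phioo (cg0 A mA Afin eps eps0)).
Qed.

Lemma mdn (f g : T -> R) : measurable_fun setT f -> measurable_fun setT g ->
  measurable_fun setT (fun x => `|f x - g x|).
Proof.
by move=> mf mg; apply: measurableT_comp; [exact: normr_measurable|exact: measurable_funB].
Qed.

Lemma loc_meas_mono (z g : nat -> T -> R) (y f : T -> R) :
  (forall n, measurable_fun setT (z n)) -> measurable_fun setT y ->
  (forall n, measurable_fun setT (g n)) -> measurable_fun setT f ->
  (forall n x, `|z n x - y x| <= `|g n x - f x|) ->
  loc_meas_conv mu g f -> loc_meas_conv mu z y.
Proof.
move=> mz my mg mf H cg A mA Afin eps eps0.
apply: cvge0P => [n|e e0]; first exact: measure_ge0.
apply: filterS (cvge0_ev _ (cg A mA Afin eps eps0) e e0) => n hn.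
apply: le_trans hn; apply: le_measure; rewrite ?inE.
- apply: measurableI => //; apply: (mset_lt (fun x => `|z n x - y x|) eps).
  exact: mdn.
- apply: measurableI => //; apply: (mset_lt (fun x => `|g n x - f x|) eps).
  exact: mdn.
- move=> x [Ax hx]; split => //=; exact: lt_le_trans hx (H n x).
Qed.

Definition Approx (h : T -> R) := forall lam : R, 0 < lam -> forall del : R, 0 < del ->
  exists g : nat -> T -> R, (forall k, L2 (g k) /\ (E (g k) < del%:E)%E) /\
    loc_meas_conv mu g (fun x => lam * h x).

Lemma ker_approx h : kerLe mu E h -> Approx h.
Proof.
move=> [mh _ hn] lam lam0 del del0.
pose c := Num.min (del / (4 * lam)) lam^-1.
have c0 : 0 < c by rewrite lt_min divr_gt0 ?mulr_gt0 ?invr_gt0.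
have : (normLe mu E h < c%:E)%E by rewrite hn lte_fin.
move/ereal_inf_lt => [_ [l [l0 hl] <-] hlc].
rewrite lte_fin lt_min in hlc; case/andP: hlc => hl1 hl2.
rewrite ltr_pdivlMr ?mulr_gt0 // in hl1.
have hli : lam * lam^-1 = 1 by rewrite mulfV // lt0r_neq0.
have ll0 : 0 < lam * l by rewrite mulr_gt0.
have ll1 : lam * l <= 1 by nra.
have ll2 : 2 * (lam * l) < del by nra.
have : (Ee mu E (fun x => (l^-1 * h x)%R) < 2%:E)%E.
  by apply: le_lt_trans hl _; rewrite lte_fin; lra.
move/Ee_approx => [w [Hw cw]].
exists (fun k x => (lam * l) * w k x); split.
  move=> k; have [Lw Ew] := Hw k; split.
    apply: (L2_le mu _ (w k)) => //.
      by apply: measurable_funM; [exact: measurable_cst| exact: (L2_meas mu _ Lw)].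
    move=> x; rewrite normrM (ger0_norm (ltW ll0)); exact: ler_piMl.
  apply: le_lt_trans (E_scale _ _ HE _ _ Lw _) _; first by rewrite (ltW ll0) ll1.
  apply: le_lt_trans (lee_wpmul2l _ (ltW Ew)) _; first by rewrite lee_fin ltW.
  by rewrite -EFinM lte_fin; lra.
move=> A mA Afin eps eps0.
have := cw A mA Afin (eps / (lam * l)) (divr_gt0 eps0 ll0).
suff -> : (fun n => mu (A `&` [set x | eps < `|lam * l * w n x - lam * h x|])) =
  (fun n => mu (A `&` [set x | eps / (lam * l) < `|w n x - l^-1 * h x|])) by [].
apply/funext => n; congr (mu (A `&` _)).
apply/seteqP; split => x /=.
  have -> : lam * l * w n x - lam * h x = (lam * l) * (w n x - l^-1 * h x).
    by field; rewrite lt0r_neq0.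
  by rewrite normrM (ger0_norm (ltW ll0)) ltr_pdivrMr // mulrC.
have -> : lam * l * w n x - lam * h x = (lam * l) * (w n x - l^-1 * h x).
  by field; rewrite lt0r_neq0.
by rewrite normrM (ger0_norm (ltW ll0)) ltr_pdivrMr // mulrC.
Qed.

Lemma approx_neg h : Approx h -> Approx (fun x => - h x).
Proof.
move=> Ha lam lam0 del del0; have [g [Hg cg]] := Ha lam lam0 del del0.
exists (fun k x => - g k x); split.
  move=> k; have [Lg Eg] := Hg k; split; first exact: L2_N.
  by rewrite (E_sym _ _ HE _ Lg).
move=> A mA Afin eps eps0; have := cg A mA Afin eps eps0.
suff -> : (fun n => mu (A `&` [set x | eps < `|- g n x - lam * - h x|])) =
  (fun n => mu (A `&` [set x | eps < `|g n x - lam * h x|])) by [].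
apply/funext => n; congr (mu (A `&` _)); apply/seteqP; split => x /=;
  by rewrite mulrN -opprD normrN.
Qed.

Lemma inv_approx h alpha : measurable_fun setT h -> Approx h -> 0 <= alpha ->
  E_invariant mu E [set x | alpha < h x].
Proof.
move=> mh Ha a0; split; first exact: mset_lt.
move=> u Lu.
have mu' := L2_meas _ _ Lu.
case: (HE) => _ _ Elsc _ _.
pose lam (n : nat) : R := n.+1%:R.
have lam0 n : 0 < lam n by rewrite /lam ltr0Sn.
pose v n x := Cc (lam n * alpha) (lam n * h x).
pose cl n x := clamp (u x) (v n x).
have mv n : measurable_fun setT (v n).
  apply: (lip_meas _ _ (fun t => Cc (lam n * alpha) t) (fun x => lam n * h x)).
    exact: Cc_lip.
  by apply: measurable_funM => //; exact: measurable_cst.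
have mcl n : measurable_fun setT (cl n).
  apply: (measurable_maxr (f := fun x => Num.min (u x) (v n x)) (g := fun x => - v n x)).
    exact: measurable_minr.
  exact: measurableT_comp.
have Lcl n : L2 (cl n).
  apply: (L2_le mu (cl n) u (mcl n) Lu) => x.
  exact: clamp_abs (Cc_ge0 _ _).
have claim n : (E (cl n) <= E u)%E.
  apply/lee_addgt0Pr => del del0.
  have del20 : 0 < del / 2 by rewrite divr_gt0.
  have [g [Hg cg]] := Ha (lam n) (lam0 n) (del / 2) del20.
  have c0 : 0 <= lam n * alpha by rewrite mulr_ge0 // ltW.
  pose w k x := Cc (lam n * alpha) (g k x).
  pose z k x := clamp (u x) (w k x).
  have Lw k : L2 (w k).
    exact: (L2_lip mu (fun t => Cc (lam n * alpha) t) (g k) (Hg k).1 (Cc0 _ c0) (Cc_lip _)).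
  have Ew k : (E (w k) < (del / 2)%:E)%E.
    apply: le_lt_trans (Hg k).2.
    exact: (E_contr1 _ _ HE (g k) (fun t => Cc (lam n * alpha) t) (Hg k).1 (Cc0 _ c0) (Cc_lip _)).
  have mz k : measurable_fun setT (z k).
    have mw := L2_meas _ _ (Lw k).
    apply: (measurable_maxr (f := fun x => Num.min (u x) (w k x)) (g := fun x => - w k x)).
      exact: measurable_minr.
    exact: measurableT_comp.
  have Lz k : L2 (z k).
    apply: (L2_le mu (z k) u (mz k) Lu) => x.
    exact: clamp_abs (Cc_ge0 _ _).
  have Ez k : (E (z k) <= E u + del%:E)%E.
    apply: le_trans (E_clamp _ _ HE u (w k) Lu (Lw k)) _.
    rewrite -addeA; apply: leeD => //.
    apply: le_trans (leeD (ltW (Ew k)) (ltW (Ew k))) _.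
    by rewrite -EFinD lee_fin; lra.
  have cz : L2_conv mu z (cl n).
    apply: (dom_loc_L2 mu z (cl n) u Lu mz (mcl n)).
    - by move=> k x; exact: clamp_abs (Cc_ge0 _ _).
    - by move=> x; exact: clamp_abs (Cc_ge0 _ _).
    apply: (loc_meas_mono z g (cl n) (fun x => lam n * h x) mz (mcl n)).
    - by move=> k; exact: (L2_meas _ _ (Hg k).1).
    - by apply: measurable_funM => //; exact: measurable_cst.
    - move=> k x; apply: le_trans (clamp_lip _ _ _ (Cc_ge0 _ _) (Cc_ge0 _ _)) _.
      exact: Cc_lip.
    - exact: cg.
  apply: le_trans (Elsc z (cl n) Lz (Lcl n) cz) _.
  exact: limn_einf_le.
pose A := [set x | alpha < h x].
have mA : measurable A by exact: mset_lt.
pose t x := \1_A x * u x.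
have mt : measurable_fun setT t.
  by apply: measurable_funM => //; exact: measurable_indic.
have tb x : `|t x| <= `|u x|.
  by rewrite /t indicE; case: (_ \in _); rewrite ?mul1r ?mul0r ?normr0.
have Lt : L2 t by exact: (L2_le mu t u mt Lu).
have ct : L2_conv mu cl t.
  apply: (L2_conv_pw mu cl t u Lu mcl mt) => //.
    by move=> n x; exact: clamp_abs (Cc_ge0 _ _).
  move=> x; apply: cvg_near_cst.
  rewrite /t indicE; case: (boolP (x \in A)) => xA.
    have hx : alpha < h x by move/set_mem: xA.
    near=> n.
    have h1 : `|u x| / (h x - alpha) <= n%:R by near: n; exact: nbhs_infty_ger.
    have h2 : (n%:R : R) <= lam n by rewrite /lam ler_nat.
    rewrite ler_pdivrMr in h1; last by lra.
    rewrite mul1r /cl clamp_id //.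
    rewrite /v /Cc le_max; apply/orP; left.
    have h3 : 0 <= h x - alpha by lra.
    have h4 := normr_ge0 (u x).
    nra.
  apply: nearW => n; rewrite mul0r /cl.
  have hx : h x <= alpha.
    by rewrite leNgt; apply/negP => hh; apply: (negP xA); apply/mem_set.
  have -> : v n x = 0.
    rewrite /v /Cc; have := lam0 n => l0.
    have : lam n * h x - lam n * alpha <= 0 by nra.
    by move=> hh; have [h5|h5] := leP (lam n * h x - lam n * alpha) 0; lra.
  exact: clamp_0.
apply: le_trans (Elsc cl t Lcl Lt ct) _.
exact: limn_einf_le.
Unshelve. all: by end_near. Qed.

End Main.

Section Real4.
Context {R : realType}.
Lemma eq_of_close (a c : R) :
  (forall k : nat, a <= c + (k.+1%:R)^-1 /\ c - (k.+1%:R)^-1 <= a) -> a = c.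
Proof.
move=> H; apply: contrapT => ne.
have d0 : 0 < `|a - c| by rewrite normr_gt0 subr_eq0; apply/eqP.
have [k _ Hk] := nbhs_infty_gtr (`|a - c|^-1).
have hk := Hk k (leqnn k).
have [h1 h2] := H k.
set i := (k.+1%:R : R)^-1.
rewrite -/i in h1 h2.
have i0 : 0 < i by rewrite invr_gt0 ltr0Sn.
have hi : i * k.+1%:R = 1 by rewrite mulVf // pnatr_eq0.
set j := `|a - c|^-1.
rewrite -/j in hk.
have hj : j * `|a - c| = 1 by rewrite mulVf // lt0r_neq0.
have hkk : (k%:R : R) <= k.+1%:R by rewrite ler_nat.
have hd : `|a - c| <= i.
  have [ac|ac] := leP 0 (a - c).
    by rewrite ger0_norm //; lra.
  by rewrite ltr0_norm //; lra.
have j0 : 0 < j by rewrite invr_gt0.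
have p1 : 0 <= (i - `|a - c|) * j by apply: mulr_ge0; lra.
have p2 : 0 < (k.+1%:R - j) * i by apply: mulr_gt0; lra.
nra.
Qed.
End Real4.

Section B.
Context {d : measure_display} {T : measurableType d} {R : realType}.
Variable mu : {measure set T -> \bar R}.

Lemma null_sub (A B : set T) : measurable A -> measurable B -> A `<=` B ->
  mu B = 0%E -> mu A = 0%E.
Proof.
move=> mA mB AB B0; apply/eqP; rewrite eq_le measure_ge0 andbT -B0.
by apply: le_measure; rewrite ?inE.
Qed.

Lemma ae_notin (N : set T) : measurable N -> mu N = 0%E ->
  \forall x \ae mu, ~ N x.
Proof.
move=> mN N0; exists N; split => // x /= nnN; exact: contrapT.
Qed.

Lemma ae_false : (\forall x \ae mu, False) -> mu setT = 0%E.
Proof.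
move=> [N [mN N0 HN]]; apply: (null_sub setT N measurableT mN) => // x _.
by apply: HN.
Qed.

Lemma const_of_inv (h : T -> R) : measurable_fun setT h ->
  (forall r, 0 <= r -> mu [set x | r < h x] = 0%E \/ mu (~` [set x | r < h x]) = 0%E) ->
  (forall r, 0 <= r -> mu [set x | r < - h x] = 0%E \/ mu (~` [set x | r < - h x]) = 0%E) ->
  exists c, {ae mu, forall x, h x = c}.
Proof.
move=> mh K1 K2.
have [T0|Tpos] := eqVneq (mu setT) 0%E.
  by exists 0; exists setT; split.
pose P r := mu [set x | r < h x] = 0%E.
have mlt r : measurable [set x | r < h x] := mset_lt h r mh.
have mle r : measurable [set x | h x <= r] := mset_le h r mh.
have eqgt r : [set x | h x < r] = [set x | - r < - h x].
  by apply/seteqP; split => x /=; rewrite ltrN2.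
have mgt r : measurable [set x | h x < r].
  rewrite eqgt; apply: (mset_lt (fun x => - h x) (- r)).
  exact: measurableT_comp.
have mono r r' : r <= r' -> P r -> P r'.
  move=> rr' Pr; apply: (null_sub _ _ (mlt r') (mlt r)) => // x /=.
  exact: le_lt_trans.
have K3 r : ~ P r -> mu [set x | h x < r] = 0%E.
  move=> nP; have [r0|r0] := leP 0 r.
    case: (K1 r r0) => // H.
    apply: (null_sub _ _ (mgt r) (mle r)); first by move=> x /= /ltW.
    rewrite -H; congr (mu _); apply/seteqP; split => x /=; rewrite leNgt; by move/negP.
  have r0' : 0 <= - r by lra.
  case: (K2 (- r) r0') => H; first by rewrite eqgt.
  exfalso; apply: nP; apply: (null_sub _ _ (mlt r) _ _ H).
    by apply: measurableC; rewrite -eqgt.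
  by move=> x /= hx; rewrite ltrN2 => hh; move: (lt_trans hh hx); rewrite ltxx.
have aeP r : P r -> \forall x \ae mu, h x <= r.
  move=> Pr; apply: filterS (ae_notin _ (mlt r) Pr) => x /=.
  by rewrite leNgt => /negP.
have aenP r : ~ P r -> \forall x \ae mu, r <= h x.
  move=> nPr; apply: filterS (ae_notin _ (mgt r) (K3 r nPr)) => x /=.
  by rewrite leNgt => /negP.
have Sne : exists n : nat, P n%:R.
  apply: contrapT => nS.
  have H n : \forall x \ae mu, n%:R <= h x by apply: aenP => Pn; apply: nS; exists n.
  move/eqP: Tpos; apply; apply: ae_false.
  apply: filterS (ae_foralln H) => x Hx.
  have [n _ Hn] := nbhs_infty_gtr (h x).
  have := Hx n; have := Hn n (leqnn n) => /= h1 h2; lra.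
have Slb : exists n : nat, ~ P (- n%:R).
  apply: contrapT => nS.
  have H n : \forall x \ae mu, h x <= - n%:R.
    by apply: aeP; apply: contrapT => Pn; apply: nS; exists n.
  move/eqP: Tpos; apply; apply: ae_false.
  apply: filterS (ae_foralln H) => x Hx.
  have [n _ Hn] := nbhs_infty_gtr (- h x).
  have := Hx n; have := Hn n (leqnn n) => /= h1 h2; lra.
pose S := [set r | P r].
have [n1 Pn1] := Sne; have [n0 nP0] := Slb.
have lbS : lbound S (- n0%:R).
  move=> r Pr; rewrite leNgt; apply/negP => hr; apply: nP0; exact: mono (ltW hr) Pr.
have Sne' : S !=set0 by exists n1%:R.
have hinf : has_lbound S by exists (- n0%:R).
pose c := inf S.
exists c.
have up k : P (c + (k.+1%:R)^-1).
  have i0 : 0 < (k.+1%:R : R)^-1 by rewrite invr_gt0 ltr0Sn.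
  have [|y Py hy] := @inf_lt _ S (c + (k.+1%:R)^-1) Sne'; first by change (c < c + (k.+1%:R)^-1); rewrite ltrDl invr_gt0 ltr0Sn.
  exact: mono (ltW hy) Py.
have lo k : ~ P (c - (k.+1%:R)^-1).
  have i0 : 0 < (k.+1%:R : R)^-1 by rewrite invr_gt0 ltr0Sn.
  move=> Pk; have hc : c <= c - (k.+1%:R)^-1 := ge_inf hinf Pk.
  by move: hc; rewrite lerBrDr gerDl leNgt invr_gt0 ltr0Sn.
have H k : \forall x \ae mu, h x <= c + (k.+1%:R)^-1 /\ c - (k.+1%:R)^-1 <= h x.
  by apply: filterS2 (aeP _ (up k)) (aenP _ (lo k)) => x h1 h2; split.
apply: filterS (ae_foralln H) => x Hx; exact: eq_of_close.
Qed.

End B.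

Theorem theorem3p16 (d : measure_display) (T : measurableType d) (R : realType)
  (mu : {measure set T -> \bar R}) (E : (T -> R) -> \bar R) :
  sigma_finite setT mu ->
  nonlinear_dirichlet_form mu E ->
  (forall (h : T -> R) (alpha : R), kerLe mu E h -> 0 <= alpha ->
     E_invariant mu E [set x | alpha < h x])
  /\
  (irreducible mu E ->
     forall h : T -> R, kerLe mu E h -> exists c : R, {ae mu, forall x, h x = c}).
Proof.
move=> _ HE; split.
  move=> h alpha hk a0; have mh : measurable_fun setT h by case: hk.
  exact: (inv_approx mu E HE h alpha mh (ker_approx mu E HE h hk) a0).
move=> irr h hk.
have mh : measurable_fun setT h by case: hk.
have Ah := ker_approx mu E HE h hk.
apply: (const_of_inv mu h mh).
- move=> r r0; apply: irr; exact: (inv_approx mu E HE h r mh Ah r0).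
- move=> r r0; apply: irr.
  apply: (inv_approx mu E HE (fun x => - h x) r _ (approx_neg mu E HE h Ah) r0).
  exact: measurableT_comp.
Qed.
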